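(* Let $P$ be a finite set of points in the plane in general position with $|P|$ even, and suppose $P=A\sqcup B$ where each of $A$ and $B$ is a union of vertex sets of connected components of the underlying graph of $P$. Then every halving line of $P$ passing through two points of $A$ has exactly $|B|/2$ points of $B$ strictly on each side, and symmetrically every halving line of $P$ passing through two points of $B$ has exactly $|A|/2$ points of $A$ strictly on each side.
   Context: Points are in general position if no three are collinear. For a finite set $P$ of $n$ points in general position with $n$ even, a halving line of $P$ is a line through two points of $P$ that has exactly $(n-2)/2$ points of $P$ strictly on each side. The underlying graph of $P$ has vertex set $P$, and two points are adjacent if and only if the line through them is a halving line of $P$. *)

(* Defs.v *)
From HB Require Import structures.
From mathcomp Require Import all_boot all_order all_algebra.
Set Implicit Arguments. Unset Strict Implicit. Unset Printing Implicit Defensive.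
Import Order.TTheory GRing.Theory Num.Theory.
Local Open Scope ring_scope.

Section Geom.
Variable R : realFieldType.
Definition point := (R * R)%type.

(* orientation determinant: > 0 iff r is strictly to the left of the
   directed line p -> q, < 0 iff strictly to the right, 0 iff collinear *)
Definition orient (p q r : point) : R :=
  (q.1 - p.1) * (r.2 - p.2) - (q.2 - p.2) * (r.1 - p.1).

Definition nleft (S : seq point) (p q : point) : nat :=
  count (fun r => 0 < orient p q r) S.
Definition nright (S : seq point) (p q : point) : nat :=
  count (fun r => orient p q r < 0) S.

Definition general_position (P : seq point) : Prop :=
  uniq P /\
  forall p q r, p \in P -> q \in P -> r \in P ->
    p != q -> q != r -> p != r -> orient p q r != 0.

Definition halving_line (P : seq point) (p q : point) : bool :=
  [&& p \in P, q \in P, p != q,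
      nleft P p q == ((size P - 2) %/ 2)%N &
      nright P p q == ((size P - 2) %/ 2)%N].

Definition adjacent (P : seq point) : rel point := fun p q => halving_line P p q.

Definition reachable (P : seq point) (x y : point) : Prop :=
  x \in P /\ exists s : seq point, path (adjacent P) x s /\ last x s = y.

Definition union_of_components (P A : seq point) : Prop :=
  {subset A <= P} /\ forall x y, x \in A -> reachable P x y -> y \in A.
End Geom.

(* Main.v *)
Require Import Defs.
From HB Require Import structures.
From mathcomp Require Import all_boot all_order all_algebra.
From mathcomp Require Import ring lra zify.
Import Order.TTheory GRing.Theory Num.Theory.
Local Open Scope ring_scope.

Lemma count_split (T : eqType) (a b c : pred T) (s : seq T) :
  (forall z, z \in s -> a z = b z || c z) ->
  (forall z, z \in s -> ~~ (b z && c z)) ->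
  count a s = (count b s + count c s)%N.
Proof.
elim: s => [|z s IH] //= H1 H2.
rewrite IH; last first.
  by move=> w ws; apply: H2; rewrite inE ws orbT.
  by move=> w ws; apply: H1; rewrite inE ws orbT.
rewrite H1 ?mem_head //.
have := H2 z (mem_head _ _).
by case: (b z); case: (c z) => //= _; lia.
Qed.

Lemma count_sub_lt (T : eqType) (a b : pred T) s z :
  (forall w, w \in s -> a w -> b w) -> z \in s -> b z -> ~~ a z ->
  (count a s < count b s)%N.
Proof.
move=> Hab zs bz naz.
rewrite (@count_split _ b a (predI b (predC a)) s).
- have : (0 < count (predI b (predC a)) s)%N.
    by rewrite -has_count; apply/hasP; exists z => //=; rewrite bz naz.
  lia.
- move=> w ws /=; case aw: (a w); first by rewrite (Hab _ ws aw).
  by rewrite /= andbT.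
- by move=> w _ /=; case: (a w); rewrite ?andbF.
Qed.

Lemma exists_diff (T : eqType) (S0 S1 : pred T) s :
  count S0 s = count S1 s -> has (fun z => S0 z != S1 z) s ->
  exists2 x, x \in s & S0 x && ~~ S1 x.
Proof.
move=> Hc Hh.
case: (boolP (has (fun z => S0 z && ~~ S1 z) s)) => [/hasP[x xs Hx]|Hn].
  by exists x.
have H01 : forall w, w \in s -> S0 w -> S1 w.
  move=> w ws S0w; have := (hasPn Hn) w ws.
  by rewrite /= S0w /= negbK.
move/hasP: Hh => [w ws Hw].
have Hw' : S1 w && ~~ S0 w by move: Hw (H01 w ws); case: (S0 w); case: (S1 w) => //= _; apply.
move/andP: Hw' => [S1w nS0w].
have := @count_sub_lt _ S0 S1 s w H01 ws S1w nS0w.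
by rewrite Hc ltnn.
Qed.

Lemma count_le1_eq (T : eqType) (a : pred T) s x y : uniq s ->
  (count a s <= 1)%N -> x \in s -> y \in s -> a x -> a y -> x = y.
Proof.
move=> us c1 xs ys ax ay; case: (eqVneq x y) => // nxy.
have : (size [:: x; y] <= size (filter a s))%N.
  apply: uniq_leq_size; first by rewrite /= !inE nxy.
  by move=> z; rewrite !inE mem_filter => /orP[]/eqP->; rewrite ?ax ?ay.
by rewrite size_filter /=; lia.
Qed.

Lemma count_ge2 (T: eqType) (a : pred T) s : uniq s -> (1 < count a s)%N ->
  exists x y, [/\ x \in s, y \in s, a x, a y & x != y].
Proof.
move=> us; rewrite -size_filter.
have uf : uniq (filter a s) by apply: filter_uniq.
have xin : forall z, z \in filter a s -> a z /\ z \in s.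
  by move=> z; rewrite mem_filter => /andP[].
move: uf xin; case: (filter a s) => [|x [|y rest]] //= uf xin _.
have [ax xs] := xin x (mem_head _ _).
have [ay ys] : a y /\ y \in s by apply: xin; rewrite !inE eqxx orbT.
exists x, y; split => //.
by move: uf; rewrite !inE negb_or => /andP[/andP[]].
Qed.
Section Geo.
Variable R : realFieldType.

Definition dot (v p : point R) : R := v.1 * p.1 + v.2 * p.2.

Lemma pair_neq (x y : point R) : x != y -> (x.1 != y.1) || (x.2 != y.2).
Proof. by case: x y => [x1 x2] [y1 y2]; rewrite xpair_eqE negb_and. Qed.

Lemma orient_lambda (N x y : point R) :
  x != y -> (N.1 != 0) || (N.2 != 0) -> dot N x = dot N y ->
  exists l, l != 0 /\ forall r, orient x y r = l * (dot N r - dot N x).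
Proof.
case: N x y => [n1 n2] [x1 x2] [y1 y2] /pair_neq /= Hxy HN; rewrite /dot /= => H.
have E : n1 * (y1 - x1) + n2 * (y2 - x2) = 0 by lra.
case: (eqVneq n1 0) => [n10|n1nz].
  rewrite n10 eqxx /= in HN.
  have ey2 : y2 = x2.
    move: E; rewrite n10 mul0r add0r => /eqP; rewrite mulf_eq0 (negbTE HN) /=.
    by rewrite subr_eq0 => /eqP.
  move: Hxy; rewrite ey2 eqxx orbF => Hx1.
  exists ((y1 - x1) / n2); split.
    by rewrite mulf_neq0 ?invr_eq0 // subr_eq0 eq_sym.
  move=> [r1 r2]; rewrite /orient /= n10.
  by field.
have Hl : - (y2 - x2) != 0.
  rewrite oppr_eq0; apply/negP => /eqP e2.
  move: E; rewrite e2 mulr0 addr0 => /eqP; rewrite mulf_eq0 (negbTE n1nz) /=.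
  rewrite subr_eq0 => /eqP e1.
  move/eqP: e2; rewrite subr_eq0 => /eqP e2.
  by move: Hxy; rewrite e1 e2 !eqxx.
exists (- (y2 - x2) / n1); split.
  by rewrite mulf_neq0 ?invr_eq0.
move=> [r1 r2]; rewrite /orient /=.
apply: (mulfI n1nz).
have -> : n1 * (- (y2 - x2) / n1 * (n1 * r1 + n2 * r2 - (n1 * x1 + n2 * x2)))
   = - (y2 - x2) * (n1 * r1 + n2 * r2 - (n1 * x1 + n2 * x2)) by field.
have E' : (n1 * (y1 - x1) + n2 * (y2 - x2)) * (r2 - x2) = 0 by rewrite E mul0r.
lra.
Qed.

Definition det2 (v w : point R) : R := v.1 * w.2 - v.2 * w.1.
Definition sig (N0 D : point R) (t : R) (p : point R) : R := dot N0 p + t * dot D p.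

Lemma lin_root (a b s s' : R) : s <= s' -> 0 <= a + s * b -> a + s' * b <= 0 ->
  exists t, [/\ s <= t, t <= s' & a + t * b = 0].
Proof.
move=> ss' h0 h1.
case: (eqVneq (a + s * b) 0) => [e|ne]; first by exists s.
have hp : 0 < a + s * b by rewrite lt_def ne h0.
case: (eqVneq b 0) => [b0|bnz]; first by move: hp h1; rewrite b0 !mulr0; lra.
have bn : b < 0 by nra.
exists (- a / b).
have tb : (- a / b) * b = - a by field.
split; [nra | nra | lra].
Qed.

Lemma nondeg (N0 D p q : point R) : det2 N0 D != 0 ->
  dot N0 p = dot N0 q -> dot D p = dot D q -> p = q.
Proof.
case: N0 D p q => [a1 a2] [d1 d2] [p1 p2] [q1 q2]; rewrite /det2 /dot /= => Hd h1 h2.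
have e1 := congr1 (fun z => z * d2) h1; have e2 := congr1 (fun z => z * a2) h2.
have e3 := congr1 (fun z => z * d1) h1; have e4 := congr1 (fun z => z * a1) h2.
simpl in e1, e2, e3, e4.
have E1 : (a1 * d2 - a2 * d1) * (p1 - q1) = 0 by lra.
have E2 : (a1 * d2 - a2 * d1) * (p2 - q2) = 0 by lra.
move/eqP: E1; rewrite mulf_eq0 (negbTE Hd) /= subr_eq0 => /eqP ->.
move/eqP: E2; rewrite mulf_eq0 (negbTE Hd) /= subr_eq0 => /eqP ->.
by [].
Qed.

Variables (P B : seq (point R)) (k : nat).
Hypothesis HGP : general_position P.
Hypothesis Hsize : size P = (2 * k + 2)%N.
Hypothesis HBP : {subset B <= P}.
Hypothesis HBu : uniq B.
Hypothesis Hcomp : forall x y, x \in P -> y \in P -> halving_line P x y -> (x \in B) = (y \in B).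

Definition Good (s : point R -> R) (S : pred (point R)) :=
  count S P = k.+1 /\ forall p q, p \in P -> q \in P -> S p -> ~~ S q -> s q <= s p.

Lemma Good_ext s s' S : (forall p, s p = s' p) -> Good s S -> Good s' S.
Proof. by move=> E [h1 h2]; split=> // p q pP qP Sp Sq; rewrite -!E; apply: h2. Qed.

Lemma Good_exists s : exists S, Good s S.
Proof.
pose le := fun p q : point R => s q <= s p.
have tot : total le by move=> p q; rewrite /le le_total.
have tr : transitive le by move=> p q r /= h1 h2; rewrite /le; exact: le_trans h2 h1.
pose st := sort le P.
have hp : perm_eq st P by rewrite /st perm_sort perm_refl.
have ust : uniq st by rewrite (perm_uniq hp); case: HGP.
have sst : sorted le st by apply: sort_sorted.
pose t := take k.+1 st; pose d := drop k.+1 st.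
have std : st = t ++ d by rewrite cat_take_drop.
have szst : size st = (2 * k + 2)%N by rewrite (perm_size hp) Hsize.
exists (fun r => r \in t); split.
  rewrite -(permP hp) std count_cat.
  have -> : count (fun r => r \in t) t = size t.
    by rewrite -count_predT; apply: eq_in_count.
  have -> : count (fun r => r \in t) d = 0%N.
    move: ust; rewrite std cat_uniq => /and3P[_ nh _].
    by apply/eqP; rewrite -leqn0 leqNgt -has_count.
  by rewrite addn0 size_takel // szst; lia.
move=> p q pP qP pt qt.
have qd : q \in d.
  by move: qP; rewrite -(perm_mem hp) std mem_cat (negbTE qt).
move: sst; rewrite (sorted_pairwise tr) std pairwise_cat => /and3P[/allrelP H _ _].
exact: H.
Qed.


Lemma sig_sub N0 D t x y : sig N0 D t x - sig N0 D t y =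
  (dot N0 x - dot N0 y) + t * (dot D x - dot D y).
Proof. by rewrite /sig; ring. Qed.

Section OneStep.
Variables (N0 D : point R) (t0 t1 c : R) (S0 S1 : pred (point R)).
Hypothesis Hdet : det2 N0 D != 0.
Hypothesis Ht : t0 <= t1.
Hypothesis Honly : forall p q t, p \in P -> q \in P -> p != q -> t0 <= t -> t <= t1 ->
  sig N0 D t p = sig N0 D t q -> t = c.
Hypothesis G0 : Good (sig N0 D t0) S0.
Hypothesis G1 : Good (sig N0 D t1) S1.

Local Notation sg := (sig N0 D).

Lemma tie_between x y : x \in P -> y \in P -> x != y ->
  sg t1 x <= sg t1 y -> sg t0 y <= sg t0 x -> [/\ t0 <= c, c <= t1 & sg c x = sg c y].
Proof.
move=> xP yP xy h1 h0.
have [t [ht0 ht1 ht]] : exists t, [/\ t0 <= t, t <= t1 &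
   (dot N0 x - dot N0 y) + t * (dot D x - dot D y) = 0].
  apply: lin_root => //; rewrite -sig_sub; lra.
have st : sg t x = sg t y by apply/eqP; rewrite -subr_eq0 sig_sub ht.
have tc := Honly x y t xP yP xy ht0 ht1 st.
by rewrite -tc.
Qed.

Lemma sign_pres z r : z \in P -> r \in P -> t0 <= c -> c <= t1 ->
  sg c z < sg c r -> sg t0 z < sg t0 r /\ sg t1 z < sg t1 r.
Proof.
move=> zP rP hc0 hc1 hlt.
have rz : r != z by apply/eqP => e; move: hlt; rewrite e ltxx.
split; rewrite ltNge; apply/negP => hle.
- have [t [ht0 ht1 ht]] : exists t, [/\ t0 <= t, t <= c &
     (dot N0 z - dot N0 r) + t * (dot D z - dot D r) = 0].
    apply: lin_root => //; rewrite -sig_sub; lra.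
  have st : sg t z = sg t r by apply/eqP; rewrite -subr_eq0 sig_sub ht.
  have zr : z != r by rewrite eq_sym.
  have tc := Honly z r t zP rP zr ht0 (le_trans ht1 hc1) st.
  by move: hlt; rewrite -tc st ltxx.
- have [t [ht0 ht1 ht]] : exists t, [/\ c <= t, t <= t1 &
     (dot N0 r - dot N0 z) + t * (dot D r - dot D z) = 0].
    apply: lin_root => //; rewrite -sig_sub; lra.
  have st : sg t r = sg t z by apply/eqP; rewrite -subr_eq0 sig_sub ht.
  have tc := Honly r z t rP zP rz (le_trans hc0 ht0) ht1 st.
  by move: hlt; rewrite -tc st ltxx.
Qed.

Lemma onestep : count S0 B = count S1 B.
Proof.
have uP : uniq P by case: HGP.
case: G0 => [c0 o0]; case: G1 => [c1 o1].
case: (boolP (has (fun z => S0 z != S1 z) P)) => Hh; last first.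
  apply: eq_in_count => b /HBP bP; have := (hasPn Hh) b bP.
  by rewrite /= negbK => /eqP.
have [x xP /andP[S0x nS1x]] := @exists_diff _ S0 S1 P (etrans c0 (esym c1)) Hh.
have Hh' : has (fun z => S1 z != S0 z) P.
  by apply/hasP; exists x => //; rewrite S0x (negbTE nS1x).
have [y yP /andP[S1y nS0y]] := @exists_diff _ S1 S0 P (etrans c1 (esym c0)) Hh'.
have xy : x != y by apply/eqP => e; move: S0x; rewrite e (negbTE nS0y).
have [hc0 hc1 hxy] := tie_between x y xP yP xy (o1 y x yP xP S1y nS1x) (o0 x y xP yP S0x nS0y).
pose Nc : point R := (N0.1 + c * D.1, N0.2 + c * D.2).
have sgc : forall p, sg c p = dot Nc p by move=> p; rewrite /sig /dot /=; ring.
have Ncnz : (Nc.1 != 0) || (Nc.2 != 0).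
  rewrite -negb_and; apply/negP => /andP[/eqP h1 /eqP h2].
  move: Hdet; have -> : det2 N0 D = det2 Nc D by rewrite /det2 /=; ring.
  by rewrite /det2 h1 h2 !mul0r subrr eqxx.
have [l [lnz Hl]] := orient_lambda Nc x y xy Ncnz (etrans (esym (sgc x)) (etrans hxy (sgc y))).
have Hl' : forall r, orient x y r = l * (sg c r - sg c x) by move=> r; rewrite !sgc.
pose U := fun r => sg c x < sg c r.
pose Dn := fun r => sg c r < sg c x.
have F1 : forall r, r \in P -> U r -> S0 r && S1 r.
  move=> r rP Ur; apply/andP; split; apply/negP => /negP nSr.
  - have [h _] := sign_pres x r xP rP hc0 hc1 Ur.
    by have := o0 x r xP rP S0x nSr; rewrite leNgt h.
  - have Ur' : sg c y < sg c r by rewrite -hxy.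
    have [_ h] := sign_pres y r yP rP hc0 hc1 Ur'.
    by have := o1 y r yP rP S1y nSr; rewrite leNgt h.
have F2 : forall r, r \in P -> Dn r -> ~~ S0 r && ~~ S1 r.
  move=> r rP Dr; apply/andP; split; apply/negP => Sr.
  - have Dr' : sg c r < sg c y by rewrite -hxy.
    have [h _] := sign_pres r y rP yP hc0 hc1 Dr'.
    by have := o0 r y rP yP Sr nS0y; rewrite leNgt h.
  - have [_ h] := sign_pres r x rP xP hc0 hc1 Dr.
    by have := o1 r x rP xP Sr nS1x; rewrite leNgt h.
have F3 : forall r, r \in P -> ~~ U r -> ~~ Dn r -> (r == x) || (r == y).
  move=> r rP nU nD.
  have e : sg c r = sg c x.
    by apply/eqP; rewrite eq_le; rewrite /U /Dn -!leNgt in nU nD; rewrite nU nD.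
  case: (boolP ((r == x) || (r == y))) => // /norP[rx ry]; exfalso; move: HGP => [_ Hg].
  have yr : y != r by rewrite eq_sym.
  have xr : x != r by rewrite eq_sym.
  have := Hg x y r xP yP rP xy yr xr.
  by rewrite Hl' e subrr mulr0 eqxx.
have Ux : U x = false by rewrite /U ltxx.
have Uy : U y = false by rewrite /U hxy ltxx.
have Dx : Dn x = false by rewrite /Dn ltxx.
have Dy : Dn y = false by rewrite /Dn hxy ltxx.
have S0E : forall r, r \in P -> S0 r = U r || (r == x).
  move=> r rP; case Ur: (U r); first by have /andP[] := F1 r rP Ur.
  case Dr: (Dn r).
    have /andP[h _] := F2 r rP Dr; rewrite (negbTE h) /=.
    by apply/esym/eqP => e; move: Dr; rewrite e Dx.
  case/orP: (F3 r rP (negbT Ur) (negbT Dr)) => /eqP ->.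
    by rewrite S0x eqxx.
  by rewrite (negbTE nS0y) /= eq_sym (negbTE xy).
have S1E : forall r, r \in P -> S1 r = U r || (r == y).
  move=> r rP; case Ur: (U r); first by have /andP[] := F1 r rP Ur.
  case Dr: (Dn r).
    have /andP[_ h] := F2 r rP Dr; rewrite (negbTE h) /=.
    by apply/esym/eqP => e; move: Dr; rewrite e Dy.
  case/orP: (F3 r rP (negbT Ur) (negbT Dr)) => /eqP ->.
    by rewrite (negbTE nS1x) /= (negbTE xy).
  by rewrite S1y eqxx.
have dUx : forall z, z \in P -> ~~ (U z && (z == x)).
  by move=> z _; apply/negP => /andP[Uz /eqP e]; move: Uz; rewrite e Ux.
have dUy : forall z, z \in P -> ~~ (U z && (z == y)).
  by move=> z _; apply/negP => /andP[Uz /eqP e]; move: Uz; rewrite e Uy.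
have cU : count U P = k.
  move: c0; rewrite (@count_split _ S0 U (pred1 x) P S0E dUx).
  rewrite count_uniq_mem // xP /=; move: (count U P) => m h; clear -h; lia.
have cD : count Dn P = k.
  have : size P = (count U P + (count Dn P + (count (pred1 x) P + count (pred1 y) P)))%N.
    rewrite -count_predT.
    rewrite (@count_split _ predT U (fun r => [|| Dn r, r == x | r == y]) P); last first.
    - move=> z _; apply/negP => /andP[Uz /or3P[Dz|/eqP e|/eqP e]].
      + by move: Uz Dz; rewrite /U /Dn => h1 h2; have := lt_trans h1 h2; rewrite ltxx.
      + by move: Uz; rewrite e Ux.
      + by move: Uz; rewrite e Uy.
    - move=> z zP /=; case: (boolP (U z)) => //= nU; case: (boolP (Dn z)) => //= nD.
      by rewrite F3.
    rewrite (@count_split _ (fun r => [|| Dn r, r == x | r == y]) Dn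
              (fun r => (r == x) || (r == y)) P); last first.
    - move=> z _; apply/negP => /andP[Dz /orP[/eqP e|/eqP e]].
      + by move: Dz; rewrite e Dx.
      + by move: Dz; rewrite e Dy.
    - by [].
    rewrite (@count_split _ (fun r => (r == x) || (r == y)) (pred1 x) (pred1 y) P) //.
    by move=> z _; apply/negP => /andP[/eqP -> /eqP e]; move: xy; rewrite e eqxx.
  rewrite !count_uniq_mem // xP yP Hsize cU /=; move: (count Dn P) => m h; clear -h; lia.
have hh : halving_line P x y.
  rewrite /halving_line xP yP xy Hsize /=.
  have -> : ((2 * k + 2 - 2) %/ 2 = k)%N by rewrite addnK mulKn.
  rewrite /nleft /nright.
  move: lnz; rewrite neq_lt => /orP[ln|lp].
  - rewrite (@eq_in_count _ _ Dn); last by move=> r _; rewrite /= Hl' nmulr_rgt0 // subr_lt0.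
    rewrite (@eq_in_count _ (fun r => orient x y r < 0) U); last by move=> r _; rewrite /= Hl' nmulr_rlt0 // subr_gt0.
    by rewrite cD cU eqxx.
  - rewrite (@eq_in_count _ _ U); last by move=> r _; rewrite /= Hl' pmulr_rgt0 // subr_gt0.
    rewrite (@eq_in_count _ (fun r => orient x y r < 0) Dn); last by move=> r _; rewrite /= Hl' pmulr_rlt0 // subr_lt0.
    by rewrite cD cU eqxx.
have hB := Hcomp x y xP yP hh.
have cS0 : count S0 B = (count U B + (x \in B))%N.
  rewrite (@count_split _ S0 U (pred1 x) B); first by rewrite count_uniq_mem.
  - by move=> z /HBP; apply: S0E.
  - by move=> z /HBP; apply: dUx.
have cS1 : count S1 B = (count U B + (y \in B))%N.
  rewrite (@count_split _ S1 U (pred1 y) B); first by rewrite count_uniq_mem.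
  - by move=> z /HBP; apply: S1E.
  - by move=> z /HBP; apply: dUy.
by rewrite cS0 cS1 hB.
Qed.

End OneStep.

Definition rt (N0 D : point R) (p q : point R) : R :=
  (dot N0 q - dot N0 p) / (dot D p - dot D q).
Definition rts N0 D := undup [seq rt N0 D p q | p <- P, q <- P].

Lemma tie_root N0 D p q (t : R) : det2 N0 D != 0 -> p \in P -> q \in P -> p != q ->
  sig N0 D t p = sig N0 D t q -> t \in rts N0 D.
Proof.
move=> Hd pP qP pq st.
have hD : dot D p - dot D q != 0.
  rewrite subr_eq0; apply/negP => /eqP e.
  have e0 : dot N0 p = dot N0 q by move: st; rewrite /sig e; lra.
  by move: pq; rewrite (nondeg N0 D p q Hd e0 e) eqxx.
rewrite mem_undup; apply/allpairsP; exists (p, q); split => //=.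
have h : t * (dot D p - dot D q) = dot N0 q - dot N0 p by move: st; rewrite /sig; lra.
by rewrite /rt -h; field.
Qed.

Lemma one_from_count N0 D (t0 t1 : R) (S0 S1 : pred (point R)) : det2 N0 D != 0 -> t0 <= t1 ->
  leq (count (fun c => (t0 <= c) && (c <= t1)) (rts N0 D)) 1 ->
  Good (sig N0 D t0) S0 -> Good (sig N0 D t1) S1 -> count S0 B = count S1 B.
Proof.
move=> Hd Ht Hc G0 G1.
have ur : uniq (rts N0 D) by apply: undup_uniq.
case: (boolP (has (fun c => (t0 <= c) && (c <= t1)) (rts N0 D))) => [/hasP[c cin Ic]|Hn].
  apply: (@onestep N0 D t0 t1 c S0 S1 Hd Ht _ G0 G1).
  move=> p q t pP qP pq h0 h1 st.
  have tin := tie_root N0 D p q t Hd pP qP pq st.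
  apply: (@count_le1_eq _ _ _ t c ur Hc tin cin _ Ic).
  by rewrite h0 h1.
apply: (@onestep N0 D t0 t1 t0 S0 S1 Hd Ht _ G0 G1).
move=> p q t pP qP pq h0 h1 st.
have tin := tie_root N0 D p q t Hd pP qP pq st.
by have := (hasPn Hn) t tin; rewrite /= h0 h1.
Qed.

Lemma chain N0 D : det2 N0 D != 0 -> forall m (t0 t1 : R) (S0 S1 : pred (point R)),
  leq (count (fun c => (t0 <= c) && (c <= t1)) (rts N0 D)) m -> t0 <= t1 ->
  Good (sig N0 D t0) S0 -> Good (sig N0 D t1) S1 -> count S0 B = count S1 B.
Proof.
move=> Hd; elim=> [|m IH] t0 t1 S0 S1 Hm Ht G0 G1.
  exact: (@one_from_count N0 D t0 t1 S0 S1 Hd Ht (leq_trans Hm (leq0n 1)) G0 G1).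
case: (leqP (count (fun c => (t0 <= c) && (c <= t1)) (rts N0 D)) 1) => H1.
  exact: (@one_from_count N0 D t0 t1 S0 S1 Hd Ht H1 G0 G1).
have ur : uniq (rts N0 D) by apply: undup_uniq.
have [c [c' [cin c'in Ic Ic' cc']]] := @count_ge2 _ _ _ ur H1.
have [a [b [ain bin /andP[ha0 ha1] /andP[hb0 hb1] ab]]] :
  exists a b, [/\ a \in rts N0 D, b \in rts N0 D, (t0 <= a) && (a <= t1),
                  (t0 <= b) && (b <= t1) & a < b].
  move: cc'; rewrite neq_lt => /orP[l|l].
  - by exists c, c'.
  - by exists c', c.
pose md := (a + b) / 2.
have am : a < md by rewrite /md; lra.
have mb : md < b by rewrite /md; lra.
have [Sm Gm] := Good_exists (sig N0 D md).
have h1 : leq (count (fun c => (t0 <= c) && (c <= md)) (rts N0 D)) m.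
  have h : ltn (count (fun c => (t0 <= c) && (c <= md)) (rts N0 D))
            (count (fun c => (t0 <= c) && (c <= t1)) (rts N0 D)).
    apply: (@count_sub_lt _ (fun c => (t0 <= c) && (c <= md))
       (fun c => (t0 <= c) && (c <= t1)) (rts N0 D) b _ bin).
    - move=> w _ /andP[h' h'']; rewrite h' /=; exact: le_trans h'' (le_trans (ltW mb) hb1).
    - by rewrite hb0 hb1.
    - by rewrite negb_and -!ltNge mb orbT.
  by rewrite -ltnS (leq_trans h Hm).
have h2 : leq (count (fun c => (md <= c) && (c <= t1)) (rts N0 D)) m.
  have h : ltn (count (fun c => (md <= c) && (c <= t1)) (rts N0 D))
            (count (fun c => (t0 <= c) && (c <= t1)) (rts N0 D)).
    apply: (@count_sub_lt _ (fun c => (md <= c) && (c <= t1))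
       (fun c => (t0 <= c) && (c <= t1)) (rts N0 D) a _ ain).
    - move=> w _ /andP[h' h'']; rewrite h'' andbT; exact: le_trans (le_trans ha0 (ltW am)) h'.
    - by rewrite ha0 ha1.
    - by rewrite negb_and -!ltNge am.
  by rewrite -ltnS (leq_trans h Hm).
have tm0 : t0 <= md by apply: le_trans ha0 (ltW am).
have tm1 : md <= t1 by apply: le_trans (ltW mb) hb1.
by rewrite (IH t0 md S0 Sm h1 tm0 G0 Gm) (IH md t1 Sm S1 h2 tm1 Gm G1).
Qed.


Lemma half_B a1 a2 : a1 \notin B -> a2 \notin B -> halving_line P a1 a2 ->
  (2 * nleft B a1 a2 = size B)%N /\ (2 * nright B a1 a2 = size B)%N.
Proof.
move=> a1B a2B /and5P[a1P a2P a12 hl hr].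
have uP : uniq P by case: HGP.
have hk : ((size P - 2) %/ 2 = k)%N by rewrite Hsize addnK mulKn.
rewrite hk in hl hr; move/eqP: hl => hl; move/eqP: hr => hr.
pose d : point R := (a2.1 - a1.1, a2.2 - a1.2).
pose u : point R := (- (a2.2 - a1.2), a2.1 - a1.1).
have oE : forall r, orient a1 a2 r = dot u r - dot u a1.
  by move=> r; rewrite /orient /dot /=; ring.
have dn : d.1 * d.1 + d.2 * d.2 != 0.
  apply/negP => /eqP e.
  have e1 : d.1 = 0 by nra.
  have e2 : d.2 = 0 by nra.
  have : a1 = a2.
    move: e1 e2; rewrite /d /=; case: (a1) (a2) => x1 x2 [y1 y2] /= e1 e2.
    by congr pair; lra.
  by move: a12 => /eqP.
pose D1 : point R := (d.1 - u.1, d.2 - u.2).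
pose D2 : point R := (- u.1 - d.1, - u.2 - d.2).
have Hd1 : det2 u D1 != 0.
  have -> : det2 u D1 = - (d.1 * d.1 + d.2 * d.2) by rewrite /det2 /= ; ring.
  by rewrite oppr_eq0.
have Hd2 : det2 d D2 != 0.
  have -> : det2 d D2 = - (d.1 * d.1 + d.2 * d.2) by rewrite /det2 /= ; ring.
  by rewrite oppr_eq0.
have o11 : orient a1 a2 a1 = 0 by rewrite oE subrr.
pose Ss := fun r => (0 < orient a1 a2 r) || (r == a1).
pose Se := fun r => (orient a1 a2 r < 0) || (r == a1).
have Gs : Good (sig u D1 0) Ss.
  split.
    rewrite (@count_split _ Ss (fun r => 0 < orient a1 a2 r) (pred1 a1) P) //.
      rewrite count_uniq_mem // a1P; move: hl; rewrite /nleft => ->; by rewrite addn1.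
    by move=> z _; apply/negP => /andP[h /eqP e]; move: h; rewrite e o11 ltxx.
  move=> p q pP qP; rewrite /Ss /sig !mul0r !addr0 negb_or => hp /andP[hq _].
  move: hq; rewrite -leNgt oE => hq.
  case/orP: hp => [|/eqP ->]; rewrite ?oE; lra.
have Ge : Good (sig d D2 1) Se.
  split.
    rewrite (@count_split _ Se (fun r => orient a1 a2 r < 0) (pred1 a1) P) //.
      rewrite count_uniq_mem // a1P; move: hr; rewrite /nright => ->; by rewrite addn1.
    by move=> z _; apply/negP => /andP[h /eqP e]; move: h; rewrite e o11 ltxx.
  have sE : forall p, sig d D2 1 p = - dot u p by move=> p; rewrite /sig /dot /=; ring.
  move=> p q pP qP; rewrite /Se !sE negb_or => hp /andP[hq _].
  move: hq; rewrite -leNgt oE => hq.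
  case/orP: hp => [|/eqP ->]; rewrite ?oE; lra.
have [Sm Gm] := Good_exists (sig u D1 1).
have Gm' : Good (sig d D2 0) Sm.
  by apply: Good_ext Gm => p; rewrite /sig /dot /=; ring.
have e1 := @chain u D1 Hd1 _ 0 1 Ss Sm (leqnn _) ler01 Gs Gm.
have e2 := @chain d D2 Hd2 _ 0 1 Sm Se (leqnn _) ler01 Gm' Ge.
have nB : forall b, b \in B -> b != a1.
  by move=> b bB; apply/eqP => e; move: a1B; rewrite -e bB.
have nB2 : forall b, b \in B -> b != a2.
  by move=> b bB; apply/eqP => e; move: a2B; rewrite -e bB.
have cs : count Ss B = nleft B a1 a2.
  by apply: eq_in_count => b bB; rewrite /Ss (negbTE (nB b bB)) orbF.
have ce : count Se B = nright B a1 a2.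
  by apply: eq_in_count => b bB; rewrite /Se (negbTE (nB b bB)) orbF.
have lr : nleft B a1 a2 = nright B a1 a2 by rewrite -cs -ce e1 e2.
have sz : size B = (nleft B a1 a2 + nright B a1 a2)%N.
  rewrite -count_predT /nleft /nright.
  apply: count_split.
  - move=> b bB /=; move: HGP => [_ Hg].
    have bP : b \in P by apply: HBP.
    have h2b : a2 != b by rewrite eq_sym; apply: nB2.
    have h1b : a1 != b by rewrite eq_sym; apply: nB.
    have := Hg a1 a2 b a1P a2P bP a12 h2b h1b.
    by rewrite neq_lt orbC.
  - by move=> b _; apply/negP => /andP[h1 h2]; have := lt_trans h2 h1; rewrite ltxx.
rewrite sz -lr; move: (nleft B a1 a2) => n; split; lia.
Qed.

End Geo.

Lemma orient_swap (R : realFieldType) (x y r : point R) : orient y x r = - orient x y r.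
Proof. by rewrite /orient; ring. Qed.

Lemma halving_sym (R : realFieldType) (P : seq (point R)) x y :
  halving_line P x y -> halving_line P y x.
Proof.
rewrite /halving_line /nleft /nright => /and5P[xP yP xy hl hr].
rewrite yP xP eq_sym xy /=.
rewrite (@eq_in_count _ (fun r => 0 < orient y x r) (fun r => orient x y r < 0)); last first.
  by move=> r _; rewrite /= orient_swap oppr_gt0.
rewrite (@eq_in_count _ (fun r => orient y x r < 0) (fun r => 0 < orient x y r)); last first.
  by move=> r _; rewrite /= orient_swap oppr_lt0.
by rewrite hl hr.
Qed.

Lemma comp_eq (R : realFieldType) (P B : seq (point R)) : union_of_components P B ->
  forall x y, x \in P -> y \in P -> halving_line P x y -> (x \in B) = (y \in B).
Proof.
move=> [_ HB] x y xP yP hxy.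
have r1 : forall u v, u \in P -> halving_line P u v -> reachable P u v.
  by move=> u v uP h; split => //; exists [:: v]; split => //=; rewrite andbT.
apply/idP/idP => h.
- exact: HB x y h (r1 x y xP hxy).
- exact: HB y x h (r1 y x yP (@halving_sym _ P x y hxy)).
Qed.

Theorem mainTheorem3 (R : realFieldType) (P A B : seq (point R)) :
  general_position P ->
  ~~ odd (size P) ->
  perm_eq P (A ++ B) ->
  union_of_components P A ->
  union_of_components P B ->
  (forall a1 a2, a1 \in A -> a2 \in A -> halving_line P a1 a2 ->
     (2 * nleft B a1 a2 = size B)%N /\ (2 * nright B a1 a2 = size B)%N) /\
  (forall b1 b2, b1 \in B -> b2 \in B -> halving_line P b1 b2 ->
     (2 * nleft A b1 b2 = size A)%N /\ (2 * nright A b1 b2 = size A)%N).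
Proof.
move=> HGP Hev Hperm HA HB.
have uP : uniq P by case: HGP.
have uAB : uniq (A ++ B) by rewrite -(perm_uniq Hperm).
move: (uAB); rewrite cat_uniq => /and3P[uA nAB uB].
have dAB : forall z, z \in A -> z \notin B.
  by move=> z zA; apply/negP => zB; move/negP: nAB; apply; apply/hasP; exists z.
have dBA : forall z, z \in B -> z \notin A.
  by move=> z zB; apply/negP => zA; move: (dAB z zA); rewrite zB.
have HAP : {subset A <= P} by case: HA.
have HBP : {subset B <= P} by case: HB.
have getk : forall x y, halving_line P x y -> exists k, size P = (2 * k + 2)%N.
  move=> x y /and5P[xP yP xy _ _].
  have s2 : (2 <= size P)%N.
    apply: (@uniq_leq_size _ [:: x; y] P).
    - by rewrite /= !inE xy.
    - by move=> z; rewrite !inE => /orP[]/eqP->.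
  exists ((size P)./2 - 1)%N.
  move: (odd_double_half (size P)); rewrite (negbTE Hev) add0n -mul2n => e.
  move: s2 e; move: (size P)./2 (size P) => h n; lia.
split.
- move=> a1 a2 a1A a2A h; have [k Hk] := getk _ _ h.
  exact: (@half_B _ P B k HGP Hk HBP uB (@comp_eq _ P B HB) a1 a2 (dAB a1 a1A) (dAB a2 a2A) h).
- move=> a1 a2 a1A a2A h; have [k Hk] := getk _ _ h.
  exact: (@half_B _ P A k HGP Hk HAP uA (@comp_eq _ P A HA) a1 a2 (dBA a1 a1A) (dBA a2 a2A) h).
Qed.
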